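(* In $\mathbb{C}\mathbb{P}^2$ with homogeneous coordinates $[x:y:z]$ let $\mathcal{A}$ be the arrangement of the lines $L_1: 2y-z=0$, $L_2: x-y=0$, $L_3: x+y-z=0$, $L_4: x=0$, $L_5: 2x-2y+z=0$, $L_6: x-z=0$, $L_7: 2x+6y-5z=0$, $L_8: y=0$, $L_9: y-z=0$, $L_{10}: z=0$, and consider $L^1_{11}: 3x+2y-3z=0$, $L^1_{12}: 5y-3z=0$, $L^1_{13}: 6x-2y-3z=0$, $L^2_{11}: x-3y-z=0$, $L^2_{12}: 2y+z=0$, $L^2_{13}: 4x+6y-13z=0$. Then $\mathcal{A}\cup\{L^1_{11},L^1_{12},L^1_{13}\}$ and $\mathcal{A}\cup\{L^2_{11},L^2_{12},L^2_{13}\}$ form a rational pair.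
   Context: A line arrangement is a finite set of distinct lines in $\mathbb{C}\mathbb{P}^2$. Its combinatorics is the pair $(\mathcal{A},\mathrm{sing}(\mathcal{A}))$ where each singular point is identified with the set of lines through it. Two arrangements are lattice isomorphic if some bijection between their lines induces a bijection between their sets of singular points. The moduli space $\mathcal{M}(\mathcal{C})$ of a combinatorics $\mathcal{C}$ is the set of arrangements with combinatorics $\mathcal{C}$ modulo $\mathrm{PGL}_3(\mathbb{C})$. A pair of arrangements means two lattice isomorphic arrangements lying in different connected components of their common moduli space. The definition field $\mathbb{F}(\mathcal{A})$ is the number field generated by the coefficients of the lines of $\mathcal{A}$. A pair is rational if both arrangements have definition field $\mathbb{Q}$. *)

(* Defs.v *)
From HB Require Import structures.
From mathcomp Require Import all_boot all_order all_algebra all_fingroup.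
From mathcomp Require Import complex.
From mathcomp Require Import all_classical all_reals all_analysis.
Import numFieldTopology.Exports numFieldNormedType.Exports.
Import GRing.Theory Num.Theory.

Set Implicit Arguments.
Unset Strict Implicit.
Unset Printing Implicit Defensive.

Local Open Scope classical_set_scope.
Local Open Scope ring_scope.

(* The usual (metric) topology on the complex numbers R[i] = complex R,
   i.e. the topology of the modulus |a + ib| = sqrt(a^2+b^2). *)
HB.instance Definition _ (R : rcfType) :=
  PseudoPointedMetric.copy (complex R) (complex R)^o.

Section Arrangements.
Variables (R : realType) (n : nat).
Local Notation C := (R[i]).

(* An ordered family of n lines of CP^2 is encoded by an n x 3 complex matrix:
   row i = (a,b,c) is a coefficient vector of the i-th line  a x + b y + c z = 0.
   Projective points are nonzero column vectors p = (x,y,z)^T. *)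
Definition lines := 'M[C]_(n, 3).

Definition incident (A : lines) (i : 'I_n) (p : 'cV[C]_3) : bool :=
  (A *m p) i 0 == 0.

Definition is_arrangement (A : lines) : Prop :=
  (forall i, row i A != 0) /\
  (forall i j, i != j -> forall c : C, row j A != c *: row i A).

(* Singular points of A, each identified with the set of lines through it:
   S belongs to sing A iff S (of size >= 2) is the set of all lines through
   some point p of CP^2. *)
Definition sing (A : lines) (S : {set 'I_n}) : Prop :=
  (2 <= #|S|)%N /\
  exists p : 'cV[C]_3, p != 0 /\ S = finset (fun i => incident A i p).

Definition lattice_iso (A B : lines) : Prop :=
  exists s : {perm 'I_n}, forall S : {set 'I_n}, sing A S <-> sing B (s @: S).

(* Two matrices represent the same arrangement up to PGL_3(C): up to reordering
   the lines, rescaling each coefficient vector, and a projective change of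
   coordinates (acting on coefficient vectors by an invertible matrix). *)
Definition proj_equiv (A B : lines) : Prop :=
  exists (s : {perm 'I_n}) (lam : 'I_n -> C) (M : 'M[C]_3),
    M \in unitmx /\ (forall i, lam i != 0) /\
    forall i, row i B = lam i *: (row (s i) A *m M).

(* The realization space of the combinatorics of A0: all arrangements lattice
   isomorphic to A0 (with the subspace topology of 'M[C]_(n,3)).
   The moduli space M(C) is its quotient by proj_equiv. *)
Definition realization (A0 : lines) : set lines :=
  [set A | is_arrangement A /\ lattice_iso A A0].

(* Subsets of the realization space that are unions of proj_equiv classes,
   i.e. preimages of subsets of the moduli space. *)
Definition saturated (A0 : lines) (U : set lines) : Prop :=
  U `<=` realization A0 /\
  forall A B, realization A0 A -> realization A0 B -> proj_equiv A B ->
    U A -> U B.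

(* Open sets of the moduli space, in the quotient topology: subsets whose
   preimage is open in the (subspace topology of the) realization space. *)
Definition moduli_open (A0 : lines) (U : set lines) : Prop :=
  saturated A0 U /\
  exists O : set lines, open O /\ U = realization A0 `&` O.

(* A (preimage of a) subset K of the moduli space is connected, for the
   quotient topology: it cannot be split by two open sets of the moduli space. *)
Definition moduli_connected (A0 : lines) (K : set lines) : Prop :=
  saturated A0 K /\
  forall U V, moduli_open A0 U -> moduli_open A0 V ->
    K `<=` U `|` V -> K `&` U !=set0 -> K `&` V !=set0 ->
    K `&` U `&` V !=set0.

Definition same_moduli_component (A0 A B : lines) : Prop :=
  exists K, moduli_connected A0 K /\ K A /\ K B.

Definition is_pair (A B : lines) : Prop :=
  is_arrangement A /\ is_arrangement B /\ lattice_iso A B /\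
  ~ same_moduli_component A A B.

(* The definition field of A is Q: every line admits a coefficient vector
   with rational coefficients (equivalently, the field generated by the
   normalized coefficients of the lines is Q). *)
Definition defined_over_Q (A : lines) : Prop :=
  forall i, exists (lam : C) (q : 'rV[rat]_3),
    lam != 0 /\ row i A = lam *: map_mx (fun x : rat => ratr x) q.

Definition is_rational_pair (A B : lines) : Prop :=
  is_pair A B /\ defined_over_Q A /\ defined_over_Q B.

End Arrangements.

Definition mx_of_table (R : realType) (n : nat) (t : seq (seq int)) :
  'M[R[i]]_(n, 3) :=
  \matrix_(i < n, j < 3) ((nth 0 (nth [::] t i) j)%:~R).

(* Coefficients (a,b,c) of a x + b y + c z = 0. *)
Definition A_table : seq (seq int) :=
  [:: [:: 0; 2; -1];
      [:: 1; -1; 0];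
      [:: 1; 1; -1];
      [:: 1; 0; 0];
      [:: 2; -2; 1];
      [:: 1; 0; -1];
      [:: 2; 6; -5];
      [:: 0; 1; 0];
      [:: 0; 1; -1];
      [:: 0; 0; 1]].

Definition A1_table : seq (seq int) :=
  A_table ++
  [:: [:: 3; 2; -3];
      [:: 0; 5; -3];
      [:: 6; -2; -3]].

Definition A2_table : seq (seq int) :=
  A_table ++
  [:: [:: 1; -3; -1];
      [:: 0; 2; 1];
      [:: 4; 6; -13]].

Definition arrA1 (R : realType) : 'M[R[i]]_(13, 3) := mx_of_table R 13 A1_table.
Definition arrA2 (R : realType) : 'M[R[i]]_(13, 3) := mx_of_table R 13 A2_table.

(* Main.v *)
Require Import Defs.
From HB Require Import structures.
From mathcomp Require Import all_boot all_order all_algebra all_fingroup.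
From mathcomp Require Import complex.
From mathcomp Require Import all_classical all_reals all_analysis.
From mathcomp Require Import ring.
Import numFieldTopology.Exports numFieldNormedType.Exports.
Import GRing.Theory Num.Theory.

Set Implicit Arguments.
Unset Strict Implicit.
Unset Printing Implicit Defensive.

Local Open Scope classical_set_scope.
Local Open Scope ring_scope.
Definition dt (K : pzRingType) (a b c : K * K * K) : K :=
  let: (a0,a1,a2) := a in let: (b0,b1,b2) := b in let: (c0,c1,c2) := c in
  a0*(b1*c2 - b2*c1) - a1*(b0*c2 - b2*c0) + a2*(b0*c1 - b1*c0).
Section Core.
Variable K : numFieldType.

Lemma mul0_nz (c x : K) : c != 0 -> c * x = 0 -> x = 0.
Proof. by move=> hc /eqP; rewrite mulf_eq0 (negbTE hc) /= => /eqP. Qed.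

Lemma eq_neg (x y : K) : x + y = 0 -> x = - y.
Proof. by move=> h; apply/eqP; rewrite -addr_eq0 h. Qed.
Lemma eq_neg' (x y : K) : y + x = 0 -> x = - y.
Proof. by move=> h; apply/eqP; rewrite -addr_eq0 addrC h. Qed.

Lemma comb2 (p e1 e2 al be : K) : e1 = 0 -> e2 = 0 -> p = al * e1 + be * e2 -> p = 0.
Proof. by move=> -> -> ->; rewrite !mulr0 addr0. Qed.
Lemma comb3 (p e1 e2 e3 al be ga : K) : e1 = 0 -> e2 = 0 -> e3 = 0 ->
  p = al * e1 + be * e2 + ga * e3 -> p = 0.
Proof. by move=> -> -> -> ->; rewrite !mulr0 !addr0. Qed.

Lemma nz_of (e f : K) : e != 0 -> e = f -> f != 0.
Proof. by move=> h <-. Qed.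

Lemma core (a b c x0 y0 z0 x1 y1 z1 x4 y4 z4 x5 y5 z5 x6 y6 z6 x8 y8 z8
   x10 y10 z10 x11 y11 z11 x12 y12 z12 : K) :
  let u0 := (x0,y0,z0) in let u1 := (x1,y1,z1) in let u2 := (1,1,-1) in
  let u3 := (a,0,0) in let u4 := (x4,y4,z4) in let u5 := (x5,y5,z5) in
  let u6 := (x6,y6,z6) in let u7 := (0,b,0) in let u8 := (x8,y8,z8) in
  let u9 := (0,0,c) in let u10 := (x10,y10,z10) in let u11 := (x11,y11,z11) in
  let u12 := (x12,y12,z12) in
  dt u1 u3 u7 = 0 -> dt u0 u7 u9 = 0 -> dt u7 u8 u9 = 0 -> dt u7 u9 u11 = 0 ->
  dt u3 u5 u9 = 0 -> dt u2 u3 u8 = 0 -> dt u2 u5 u7 = 0 -> dt u1 u5 u8 = 0 ->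
  dt u0 u1 u2 = 0 -> dt u1 u4 u9 = 0 -> dt u0 u3 u4 = 0 -> dt u2 u4 u6 = 0 ->
  dt u0 u5 u6 = 0 -> dt u5 u7 u10 = 0 -> dt u1 u10 u11 = 0 -> dt u4 u5 u12 = 0 ->
  dt u0 u10 u12 = 0 -> dt u6 u11 u12 = 0 ->
  dt u3 u7 u9 != 0 -> dt u3 u5 u7 != 0 -> dt u3 u7 u8 != 0 -> dt u1 u3 u9 != 0 ->
  dt u0 u3 u7 != 0 -> dt u3 u4 u7 != 0 -> dt u3 u6 u7 != 0 -> dt u3 u7 u10 != 0 ->
  dt u3 u7 u12 != 0 -> dt u3 u9 u11 != 0 ->
  (5 * z11 + 3 * y11) * (2 * z11 - y11) = 0.
Proof.
move=> u0 u1 u2 u3 u4 u5 u6 u7 u8 u9 u10 u11 u12.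
rewrite /u0 /u1 /u2 /u3 /u4 /u5 /u6 /u7 /u8 /u9 /u10 /u11 /u12 {u0 u1 u2 u3 u4 u5 u6 u7 u8 u9 u10 u11 u12}.
rewrite /dt.
move=> h137 h079 h789 h7911 h359 h238 h257 h158 h012 h149 h034 h246 h056
  h5710 h11011 h4512 h01012 h61112 n379 n357 n378 n139 n037 n347 n367 n3710 n3712 n3911.
have := nz_of n379 (_ : _ = a * b * c) => /(_ ltac:(ring)).
rewrite !mulf_eq0 !negb_or => /andP[/andP[ha hb] hc].
have hab : a * b != 0 by rewrite mulf_neq0.
have ez1 : z1 = 0 by apply: (mul0_nz hab); rewrite -[RHS]h137; ring.
subst z1.
have ex0 : x0 = 0 by apply: (mul0_nz (mulf_neq0 hb hc)); rewrite -[RHS]h079; ring.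
subst x0.
have ex8 : x8 = 0 by apply: (mul0_nz (c := - (b * c))); [rewrite oppr_eq0 mulf_neq0 |rewrite -[RHS]h789; ring].
subst x8.
have ex11 : x11 = 0 by apply: (mul0_nz (mulf_neq0 hb hc)); rewrite -[RHS]h7911; ring.
subst x11.
have ey5 : y5 = 0 by apply: (mul0_nz (mulf_neq0 ha hc)); rewrite -[RHS]h359; ring.
subst y5.
have e8 : y8 + z8 = 0 by apply: (mul0_nz (c := - a)); [rewrite oppr_eq0 |rewrite -[RHS]h238; ring].
have ey8 : y8 = - z8 by apply/eqP; rewrite -addr_eq0 e8.
subst y8.
have e5 : z5 + x5 = 0 by apply: (mul0_nz (c := - b)); [rewrite oppr_eq0 |rewrite -[RHS]h257; ring].
have ez5 : z5 = - x5 by apply/eqP; rewrite -addr_eq0 e5.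
subst z5.
have hx5 : x5 != 0.
  by apply: contra_neq n357 => ->; ring.
have hz8 : z8 != 0.
  by apply: contra_neq n378 => ->; ring.
have e1 : x1 + y1 = 0.
  by apply: (mul0_nz (c := - (x5 * z8))); [rewrite oppr_eq0 mulf_neq0 |rewrite -[RHS]h158; ring].
have ey1 := eq_neg' e1.
subst y1.
have hx1 : x1 != 0.
  by apply: contra_neq n139 => ->; ring.
have e0 : y0 + 2 * z0 = 0 by apply: (mul0_nz hx1); rewrite -[RHS]h012; ring.
have ey0 : y0 = - (2 * z0) by apply/eqP; rewrite -addr_eq0 e0.
subst y0.
have e4 : y4 + x4 = 0 by apply: (mul0_nz (mulf_neq0 hc hx1)); rewrite -[RHS]h149; ring.
have ex4 := eq_neg' e4.
subst x4.
have hz0 : z0 != 0.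
  by apply: contra_neq n037 => ->; ring.
have e4' : 2 * z4 + y4 = 0 by apply: (mul0_nz (mulf_neq0 ha hz0)); rewrite -[RHS]h034; ring.
have ey4 := eq_neg' e4'.
subst y4.
have hz4 : z4 != 0.
  by apply: contra_neq n347 => ->; ring.
have e6a : x6 + 3 * y6 + 4 * z6 = 0.
  by apply: (mul0_nz (c := - z4)); [rewrite oppr_eq0 |rewrite -[RHS]h246; ring].
have e6b : 2 * x6 + y6 + 2 * z6 = 0.
  by apply: (mul0_nz (mulf_neq0 hx5 hz0)); rewrite -[RHS]h056; ring.
have ey6 : y6 = 3 * x6.
  apply/eqP; rewrite -subr_eq0; apply/eqP.
  transitivity ((x6 + 3*y6 + 4*z6) - 2 * (2*x6 + y6 + 2*z6)); first ring.
  by rewrite e6a e6b; ring.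
have ez6 : 2 * z6 = - (5 * x6).
  apply/eqP; rewrite -subr_eq0 opprK; apply/eqP.
  transitivity (- (x6 + 3*y6 + 4*z6) + 3 * (2*x6 + y6 + 2*z6)); first ring.
  by rewrite e6a e6b; ring.
subst y6.
have hz6 : z6 != 0.
  by apply: contra_neq n367 => ->; ring.
have hx6 : x6 != 0.
  by apply: contra_neq hz6 => hx; apply: (mul0_nz (c := 2)); rewrite ?pnatr_eq0 // ez6 hx; ring.
have e10 : z10 + x10 = 0.
  by apply: (mul0_nz (mulf_neq0 hb hx5)); rewrite -[RHS]h5710; ring.
have ez10 := eq_neg e10.
subst z10.
have hx10 : x10 != 0.
  by apply: contra_neq n3710 => ->; ring.
have hz12 : z12 != 0.
  by apply: contra_neq n3712 => ->; ring.
have E1 : y10 * z11 + x10 * y11 + x10 * z11 = 0.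
  by apply: (mul0_nz hx1); rewrite -[RHS]h11011; ring.
have L1 : 2 * x12 + 3 * y12 + 2 * z12 = 0.
  by apply: (mul0_nz (mulf_neq0 hx5 hz4)); rewrite -[RHS]h4512; ring.
have L2 : (2 * x10 - y10) * x12 + x10 * y12 + 2 * x10 * z12 = 0.
  by apply: (mul0_nz hz0); rewrite -[RHS]h01012; ring.
have ez6' : 2 * z6 + 5 * x6 = 0 by rewrite ez6; ring.
have L3 : (6 * z11 + 5 * y11) * x12 - 2 * z11 * y12 + 2 * y11 * z12 = 0.
  apply: (mul0_nz hx6).
  by apply: (comb2 h61112 ez6' (al := 2) (be := x12 * y11)); ring.
set D := 12 * x10 * y11 + 24 * z11 * x10 + 6 * y10 * y11 + 4 * z11 * y10.
have hD : D * z12 = 0.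
  apply: (comb3 L1 L2 L3 (al := (2 * x10 - y10) * (-2 * z11) - x10 * (6 * z11 + 5 * y11))
    (be := 22 * z11 + 15 * y11) (ga := -4 * x10 + 3 * y10)).
  by rewrite /D; ring.
have D0 : D = 0 by apply: (mul0_nz hz12); rewrite mulrC.
apply: (mul0_nz (c := 2 * x10)); first by rewrite mulf_neq0 // pnatr_eq0.
by apply: (comb2 D0 E1 (al := z11) (be := - (6 * y11 + 4 * z11))); rewrite /D; ring.
Qed.
End Core.
Section Lin.
Variable K : fieldType.
Implicit Types a b c x p : K * K * K.

Definition dot a p : K := a.1.1 * p.1.1 + a.1.2 * p.1.2 + a.2 * p.2.
Definition cross a b : K * K * K :=
  (a.1.2 * b.2 - a.2 * b.1.2, a.2 * b.1.1 - a.1.1 * b.2, a.1.1 * b.1.2 - a.1.2 * b.1.1).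

Lemma triple_nz p : p != (0,0,0) -> [\/ p.1.1 != 0, p.1.2 != 0 | p.2 != 0].
Proof.
case: p => [[p0 p1] p2] /=; case: (eqVneq p0 0) => [->|h]; last by move=> _; apply: Or31.
case: (eqVneq p1 0) => [->|h]; last by move=> _; apply: Or32.
case: (eqVneq p2 0) => [->|h]; last by move=> _; apply: Or33.
by rewrite eqxx.
Qed.

Lemma mul0_nzF (c y : K) : c != 0 -> c * y = 0 -> y = 0.
Proof. by move=> hc /eqP; rewrite mulf_eq0 (negbTE hc) /= => /eqP. Qed.

Lemma comb3F (q e1 e2 e3 al be ga : K) : e1 = 0 -> e2 = 0 -> e3 = 0 ->
  q = al * e1 + be * e2 + ga * e3 -> q = 0.
Proof. by move=> -> -> -> ->; rewrite !mulr0 !addr0. Qed.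

Lemma det_ker a b c p : dot a p = 0 -> dot b p = 0 -> dot c p = 0 ->
  p != (0,0,0) -> dt a b c = 0.
Proof.
move=> ha hb hc /triple_nz.
move: ha hb hc; case: a => [[a0 a1] a2]; case: b => [[b0 b1] b2];
case: c => [[c0 c1] c2]; case: p => [[p0 p1] p2]; rewrite /dot /dt /= => ha hb hc.
case=> hp.
- apply: (mul0_nzF hp); rewrite mulrC.
  apply: (comb3F ha hb hc (al := b1 * c2 - b2 * c1) (be := c1 * a2 - c2 * a1)
     (ga := a1 * b2 - a2 * b1)); ring.
- apply: (mul0_nzF hp); rewrite mulrC.
  apply: (comb3F ha hb hc (al := b2 * c0 - b0 * c2) (be := c2 * a0 - c0 * a2)
     (ga := a2 * b0 - a0 * b2)); ring.
- apply: (mul0_nzF hp); rewrite mulrC.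
  apply: (comb3F ha hb hc (al := b0 * c1 - b1 * c0) (be := c0 * a1 - c1 * a0)
     (ga := a0 * b1 - a1 * b0)); ring.
Qed.

Lemma dt_cross a b x : dt a b x = dot x (cross a b).
Proof.
case: a => [[a0 a1] a2]; case: b => [[b0 b1] b2]; case: x => [[x0 x1] x2].
rewrite /dot /dt /cross /=; ring.
Qed.

Lemma ker_det a b x p : dot a p = 0 -> dot b p = 0 -> cross a b != (0,0,0) ->
  dt a b x = 0 -> dot x p = 0.
Proof.
rewrite dt_cross => ha hb /triple_nz.
move: ha hb; case: a => [[a0 a1] a2]; case: b => [[b0 b1] b2];
case: x => [[x0 x1] x2]; case: p => [[p0 p1] p2]; rewrite /dot /cross /= => ha hb.
set e := x0 * _ + _ + _ => hc he.
case: hc => hc; apply: (mul0_nzF hc); rewrite mulrC.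
- apply: (comb3F he ha hb (al := p0) (be := x1 * b2 - x2 * b1) (ga := - (x1 * a2 - x2 * a1))).
  rewrite /e; ring.
- apply: (comb3F he ha hb (al := p1) (be := x2 * b0 - x0 * b2) (ga := - (x2 * a0 - x0 * a2))).
  rewrite /e; ring.
- apply: (comb3F he ha hb (al := p2) (be := x0 * b1 - x1 * b0) (ga := - (x0 * a1 - x1 * a0))).
  rewrite /e; ring.
Qed.

Lemma cross0_prop a b : a != (0,0,0) -> cross a b = (0,0,0) ->
  exists l : K, b = (l * a.1.1, l * a.1.2, l * a.2).
Proof.
move=> /triple_nz; case: a => [[a0 a1] a2]; case: b => [[b0 b1] b2] /=.
rewrite /cross /= => hc [e0 e1 e2].
move/eqP: e0; move/eqP: e1; move/eqP: e2; rewrite !subr_eq0 => /eqP e2 /eqP e1 /eqP e0.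
case: hc => h.
- exists (b0 / a0); congr (_, _, _); first by field.
  + by apply: (mulfI h); rewrite e2; field.
  + by apply: (mulfI h); rewrite -e1; field.
- exists (b1 / a1); congr (_, _, _).
  + by apply: (mulfI h); rewrite -e2; field.
  + by field.
  + by apply: (mulfI h); rewrite e0; field.
- exists (b2 / a2); congr (_, _, _).
  + by apply: (mulfI h); rewrite e1; field.
  + by apply: (mulfI h); rewrite -e0; field.
  + by field.
Qed.
End Lin.
Lemma transfer (K : fieldType) (b3 b7 b9 b2 p q r : K*K*K) :
  dt b2 b7 b9 != 0 -> dt b3 b2 b9 != 0 -> dt b3 b7 b2 != 0 ->
  let u v := (dt v b7 b9 / dt b2 b7 b9, dt b3 v b9 / dt b3 b2 b9, - dt b3 b7 v / dt b3 b7 b2) in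
  dt (u p) (u q) (u r) = - (dt b3 b7 b9)^+2 / (dt b2 b7 b9 * dt b3 b2 b9 * dt b3 b7 b2) * dt p q r.
Proof.
move=> h1 h2 h3 u; rewrite /u; clear u.
move: h1 h2 h3.
case: b3 => [[a0 a1] a2]; case: b7 => [[b0 b1] b2']; case: b9 => [[c0 c1] c2];
case: b2 => [[d0 d1] d2]; case: p => [[p0 p1] p2]; case: q => [[q0 q1] q2]; case: r => [[r0 r1] r2].
rewrite /dt => h1 h2 h3.
field.
by rewrite h1 h2 h3.
Qed.
Section Mat.
Variables (R : realType) (n : nat).
Local Notation C := (R[i]).
Implicit Types A B : 'M[C]_(n, 3).

Definition i0 : 'I_3 := @Ordinal 3 0 isT.
Definition i1 : 'I_3 := @Ordinal 3 1 isT.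
Definition i2 : 'I_3 := @Ordinal 3 2 isT.

Lemma ord3P (l : 'I_3) : [\/ l = i0, l = i1 | l = i2].
Proof.
case: l => [[|[|[|m]]] h].
- by apply: Or31; apply/val_inj.
- by apply: Or32; apply/val_inj.
- by apply: Or33; apply/val_inj.
- by [].
Qed.

Definition vec A i : C * C * C := (A i i0, A i i1, A i i2).
Definition DA A i j k : C := dt (vec A i) (vec A j) (vec A k).
Definition flat A i j : {set 'I_n} := finset (fun k => DA A i j k == 0).
Definition pv (p : 'cV[C]_3) : C * C * C := (p i0 0, p i1 0, p i2 0).
Definition colv (t : C * C * C) : 'cV[C]_3 :=
  \col_l (if l == i0 then t.1.1 else if l == i1 then t.1.2 else t.2).

Lemma sum3 (f : 'I_3 -> C) : \sum_l f l = f i0 + f i1 + f i2.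
Proof.
rewrite !big_ord_recl big_ord0 addr0 addrA.
by congr (f _ + f _ + f _); apply/val_inj.
Qed.

Lemma incidentE A i p : incident A i p = (dot (vec A i) (pv p) == 0).
Proof. by rewrite /incident mxE sum3. Qed.

Lemma pv_nz p : p != 0 -> pv p != (0,0,0).
Proof.
apply: contra_neq => /= -[h0 h1 h2]; apply/colP => l; rewrite mxE.
by case: (ord3P l) => ->.
Qed.

Lemma pv_colv t : pv (colv t) = t.
Proof. by case: t => [[a b] c]; rewrite /pv /colv !mxE. Qed.

Lemma colv_nz t : t != (0,0,0) -> colv t != 0.
Proof.
apply: contra_neq => h; rewrite -(pv_colv t) h /pv !mxE //.
Qed.

Lemma dt_swap12 a b c : dt a b c = - dt b a c :> C.
Proof. by case: a => [[? ?] ?]; case: b => [[? ?] ?]; case: c => [[? ?] ?]; rewrite /dt; ring. Qed.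

Lemma dt_rep a c : dt a a c = 0 :> C.
Proof. by case: a => [[? ?] ?]; case: c => [[? ?] ?]; rewrite /dt; ring. Qed.

Lemma dt_rep13 a b : dt a b a = 0 :> C.
Proof. by case: a => [[? ?] ?]; case: b => [[? ?] ?]; rewrite /dt; ring. Qed.

Lemma dt_rep23 a b : dt a b b = 0 :> C.
Proof. by case: a => [[? ?] ?]; case: b => [[? ?] ?]; rewrite /dt; ring. Qed.

Lemma vec_row0 A i : row i A = 0 -> vec A i = (0,0,0).
Proof.
move=> h; have e l : A i l = 0 by have := congr1 (fun M : 'M[C]_(1,3) => M 0 l) h; rewrite !mxE.
by rewrite /vec !e.
Qed.

Lemma vec_rowZ A i j (c : C) : row j A = c *: row i A ->
  vec A j = (c * (vec A i).1.1, c * (vec A i).1.2, c * (vec A i).2).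
Proof.
move=> h; have e l : A j l = c * A i l by have := congr1 (fun M : 'M[C]_(1,3) => M 0 l) h; rewrite !mxE.
by rewrite /vec !e.
Qed.

Lemma cross_rows_nz A : is_arrangement A -> forall i j, i != j ->
  cross (vec A i) (vec A j) != (0,0,0).
Proof.
move=> [hnz hd] i j hij; apply/negP => /eqP hc.
have hvi : vec A i != (0,0,0).
  apply: contra_neq (hnz i) => hv; apply/rowP => l; rewrite !mxE.
  by move: hv; rewrite /vec => -[h0 h1 h2]; case: (ord3P l) => ->.
have [l hl] := cross0_prop hvi hc.
move/negP: (hd i j hij l); apply; apply/eqP/rowP => m; rewrite !mxE.
by move: hl; rewrite /vec /= => -[h0 h1 h2]; case: (ord3P m) => ->.
Qed.

Lemma sing_flat A : is_arrangement A -> forall i j, i != j ->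
  sing A (flat A i j).
Proof.
move=> hA i j hij; split.
  apply/card_gt1P; exists i, j; rewrite !inE /DA dt_rep13 dt_rep23 eqxx; split => //.
exists (colv (cross (vec A i) (vec A j))); split.
  exact/colv_nz/cross_rows_nz.
apply/setP => k; rewrite !inE incidentE pv_colv /DA dt_cross.
by [].
Qed.

Lemma sing_det A S p a b c : p != 0 -> S = finset (fun i => incident A i p) ->
  a \in S -> b \in S -> c \in S -> DA A a b c = 0.
Proof.
move=> hp -> ; rewrite !inE !incidentE => /eqP ha /eqP hb /eqP hc.
exact: (det_ker ha hb hc (pv_nz hp)).
Qed.

Lemma sing_flatP A : is_arrangement A -> forall S, sing A S ->
  exists i j, i != j /\ S = flat A i j.
Proof.
move=> hA S [/card_gt1P [i [j [hi hj hij]]] [p [hp hS]]].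
exists i, j; split => //; apply/setP => k; rewrite inE.
apply/idP/idP => hk.
  by apply/eqP; apply: (sing_det hp hS).
move: hi hj; rewrite hS !inE !incidentE => /eqP hi /eqP hj.
by apply/eqP; apply: (ker_det hi hj (cross_rows_nz hA hij)); apply/eqP.
Qed.

Lemma sing_transfer A B (f : {perm 'I_n}) : is_arrangement A ->
  (forall S, sing A S -> sing B (f @: S)) ->
  forall i j k, DA A i j k = 0 -> DA B (f i) (f j) (f k) = 0.
Proof.
move=> hA h i j k hk.
case: (eqVneq i j) => [<-|hij]; first by rewrite /DA dt_rep.
have hS := sing_flat hA hij.
have [_ [p [hp hpS]]] := h _ hS.
apply: (sing_det hp hpS); apply: imset_f; rewrite inE.
- by rewrite /DA dt_rep13.
- by rewrite /DA dt_rep23.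
- by rewrite hk.
Qed.

Lemma lattice_T A B (s : {perm 'I_n}) : is_arrangement A -> is_arrangement B ->
  (forall S, sing A S <-> sing B (s @: S)) ->
  forall i j k, (DA A i j k == 0) = (DA B (s i) (s j) (s k) == 0).
Proof.
move=> hA hB h i j k; apply/eqP/eqP.
  by apply: sing_transfer => // S /h.
move=> hk.
pose t : {perm 'I_n} := (s^-1)%g.
have h' : forall S, sing B S -> sing A (t @: S).
  move=> S hS; apply/(h (t @: S)).
  have -> : s @: (t @: S) = S.
    apply/setP => x; apply/imsetP/idP => [[y /imsetP [z hz ->] ->]|hx].
      by rewrite permKV.
    by exists (t x); [apply: imset_f | rewrite permKV].
  exact: hS.
have := sing_transfer hB h' hk.
by rewrite /t !permK.
Qed.

Lemma lattice_of_T A B : is_arrangement A -> is_arrangement B ->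
  (forall i j k, (DA A i j k == 0) = (DA B i j k == 0)) -> lattice_iso A B.
Proof.
move=> hA hB h; exists 1%g => S.
have -> : ((1 : {perm 'I_n}) @: S)%g = S.
  apply/setP => x; apply/imsetP/idP => [[y hy ->]|hx]; first by rewrite perm1.
  by exists x => //; rewrite perm1.
split => hS.
  have [i [j [hij ->]]] := sing_flatP hA hS.
  have -> : flat A i j = flat B i j.
    by apply/setP => k; rewrite !inE h.
  exact: sing_flat.
have [i [j [hij ->]]] := sing_flatP hB hS.
have -> : flat B i j = flat A i j.
  by apply/setP => k; rewrite !inE h.
exact: sing_flat.
Qed.

Lemma arr_of_T A : (forall i, exists j k, DA A i j k != 0) ->
  (forall i j, i != j -> exists k, DA A i j k != 0) -> is_arrangement A.
Proof.
move=> h1 h2; split.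
  move=> i; have [j [k hk]] := h1 i; apply: contra_neq hk => /vec_row0 h.
  by rewrite /DA h /dt; case: (vec A j) => [[? ?] ?]; case: (vec A k) => [[? ?] ?]; ring.
move=> i j hij c; have [k hk] := h2 i j hij; apply: contra_neq hk => /vec_rowZ h.
rewrite /DA h /dt; case: (vec A i) => [[? ?] ?]; case: (vec A k) => [[? ?] ?] /=; ring.
Qed.

End Mat.
Definition TT : seq (seq (seq nat)) :=
  [:: [:: [:: 0; 1; 2; 3; 4; 5; 6; 7; 8; 9; 10; 11; 12]; [:: 0; 1; 2]; [:: 0; 1; 2]; [:: 0; 3; 4]; [:: 0; 3; 4]; [:: 0; 5; 6]; [:: 0; 5; 6]; [:: 0; 7; 8; 9; 11]; [:: 0; 7; 8; 9; 11]; [:: 0; 7; 8; 9; 11]; [:: 0; 10; 12]; [:: 0; 7; 8; 9; 11]; [:: 0; 10; 12]];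
  [:: [:: 0; 1; 2]; [:: 0; 1; 2; 3; 4; 5; 6; 7; 8; 9; 10; 11; 12]; [:: 0; 1; 2]; [:: 1; 3; 7]; [:: 1; 4; 9]; [:: 1; 5; 8]; [:: 1; 6]; [:: 1; 3; 7]; [:: 1; 5; 8]; [:: 1; 4; 9]; [:: 1; 10; 11]; [:: 1; 10; 11]; [:: 1; 12]];
  [:: [:: 0; 1; 2]; [:: 0; 1; 2]; [:: 0; 1; 2; 3; 4; 5; 6; 7; 8; 9; 10; 11; 12]; [:: 2; 3; 8]; [:: 2; 4; 6]; [:: 2; 5; 7; 10]; [:: 2; 4; 6]; [:: 2; 5; 7; 10]; [:: 2; 3; 8]; [:: 2; 9]; [:: 2; 5; 7; 10]; [:: 2; 11]; [:: 2; 12]];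
  [:: [:: 0; 3; 4]; [:: 1; 3; 7]; [:: 2; 3; 8]; [:: 0; 1; 2; 3; 4; 5; 6; 7; 8; 9; 10; 11; 12]; [:: 0; 3; 4]; [:: 3; 5; 9]; [:: 3; 6]; [:: 1; 3; 7]; [:: 2; 3; 8]; [:: 3; 5; 9]; [:: 3; 10]; [:: 3; 11]; [:: 3; 12]];
  [:: [:: 0; 3; 4]; [:: 1; 4; 9]; [:: 2; 4; 6]; [:: 0; 3; 4]; [:: 0; 1; 2; 3; 4; 5; 6; 7; 8; 9; 10; 11; 12]; [:: 4; 5; 12]; [:: 2; 4; 6]; [:: 4; 7]; [:: 4; 8]; [:: 1; 4; 9]; [:: 4; 10]; [:: 4; 11]; [:: 4; 5; 12]];
  [:: [:: 0; 5; 6]; [:: 1; 5; 8]; [:: 2; 5; 7; 10]; [:: 3; 5; 9]; [:: 4; 5; 12]; [:: 0; 1; 2; 3; 4; 5; 6; 7; 8; 9; 10; 11; 12]; [:: 0; 5; 6]; [:: 2; 5; 7; 10]; [:: 1; 5; 8]; [:: 3; 5; 9]; [:: 2; 5; 7; 10]; [:: 5; 11]; [:: 4; 5; 12]];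
  [:: [:: 0; 5; 6]; [:: 1; 6]; [:: 2; 4; 6]; [:: 3; 6]; [:: 2; 4; 6]; [:: 0; 5; 6]; [:: 0; 1; 2; 3; 4; 5; 6; 7; 8; 9; 10; 11; 12]; [:: 6; 7]; [:: 6; 8]; [:: 6; 9]; [:: 6; 10]; [:: 6; 11; 12]; [:: 6; 11; 12]];
  [:: [:: 0; 7; 8; 9; 11]; [:: 1; 3; 7]; [:: 2; 5; 7; 10]; [:: 1; 3; 7]; [:: 4; 7]; [:: 2; 5; 7; 10]; [:: 6; 7]; [:: 0; 1; 2; 3; 4; 5; 6; 7; 8; 9; 10; 11; 12]; [:: 0; 7; 8; 9; 11]; [:: 0; 7; 8; 9; 11]; [:: 2; 5; 7; 10]; [:: 0; 7; 8; 9; 11]; [:: 7; 12]];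
  [:: [:: 0; 7; 8; 9; 11]; [:: 1; 5; 8]; [:: 2; 3; 8]; [:: 2; 3; 8]; [:: 4; 8]; [:: 1; 5; 8]; [:: 6; 8]; [:: 0; 7; 8; 9; 11]; [:: 0; 1; 2; 3; 4; 5; 6; 7; 8; 9; 10; 11; 12]; [:: 0; 7; 8; 9; 11]; [:: 8; 10]; [:: 0; 7; 8; 9; 11]; [:: 8; 12]];
  [:: [:: 0; 7; 8; 9; 11]; [:: 1; 4; 9]; [:: 2; 9]; [:: 3; 5; 9]; [:: 1; 4; 9]; [:: 3; 5; 9]; [:: 6; 9]; [:: 0; 7; 8; 9; 11]; [:: 0; 7; 8; 9; 11]; [:: 0; 1; 2; 3; 4; 5; 6; 7; 8; 9; 10; 11; 12]; [:: 9; 10]; [:: 0; 7; 8; 9; 11]; [:: 9; 12]];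
  [:: [:: 0; 10; 12]; [:: 1; 10; 11]; [:: 2; 5; 7; 10]; [:: 3; 10]; [:: 4; 10]; [:: 2; 5; 7; 10]; [:: 6; 10]; [:: 2; 5; 7; 10]; [:: 8; 10]; [:: 9; 10]; [:: 0; 1; 2; 3; 4; 5; 6; 7; 8; 9; 10; 11; 12]; [:: 1; 10; 11]; [:: 0; 10; 12]];
  [:: [:: 0; 7; 8; 9; 11]; [:: 1; 10; 11]; [:: 2; 11]; [:: 3; 11]; [:: 4; 11]; [:: 5; 11]; [:: 6; 11; 12]; [:: 0; 7; 8; 9; 11]; [:: 0; 7; 8; 9; 11]; [:: 0; 7; 8; 9; 11]; [:: 1; 10; 11]; [:: 0; 1; 2; 3; 4; 5; 6; 7; 8; 9; 10; 11; 12]; [:: 6; 11; 12]];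
  [:: [:: 0; 10; 12]; [:: 1; 12]; [:: 2; 12]; [:: 3; 12]; [:: 4; 5; 12]; [:: 4; 5; 12]; [:: 6; 11; 12]; [:: 7; 12]; [:: 8; 12]; [:: 9; 12]; [:: 0; 10; 12]; [:: 6; 11; 12]; [:: 0; 1; 2; 3; 4; 5; 6; 7; 8; 9; 10; 11; 12]]].

Definition PL : seq (seq (nat * nat)) :=
  [:: [::];
  [::];
  [:: (0, 1)];
  [::];
  [:: (0, 3)];
  [::];
  [:: (0, 5); (2, 4)];
  [:: (1, 3); (2, 5)];
  [:: (0, 7); (1, 5); (2, 3)];
  [:: (0, 7); (0, 8); (1, 4); (3, 5); (7, 8)];
  [:: (2, 5); (2, 7); (5, 7)];
  [:: (0, 7); (0, 8); (0, 9); (1, 10); (7, 8); (7, 9); (8, 9)];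
  [:: (0, 10); (4, 5); (6, 11)]].
Definition Tf (i j k : nat) : bool := k \in nth [::] (nth [::] TT i) j.

Definition okv (p : seq nat) (v : nat) : bool :=
  all (fun ij => Tf (nth 0 p ij.1) (nth 0 p ij.2) v) (nth [::] PL (size p)).

Fixpoint srch (fuel : nat) (p : seq nat) : bool :=
  if fuel is f.+1 then
    if size p == 13 then p == iota 0 13
    else all (fun v => if v \in p then true else if okv p v then srch f (rcons p v) else true) (iota 0 13)
  else false.

Lemma srch_ok : srch 14 [::].
Proof. vm_compute. reflexivity. Qed.

Lemma PL_ok : all (fun k => all (fun ij => [&& (ij.1 < k)%N, (ij.2 < k)%N & Tf ij.1 ij.2 k]) (nth [::] PL k)) (iota 0 13).
Proof. by vm_compute. Qed.
Lemma srchS f p : srch f.+1 p = if size p == 13 then p == iota 0 13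
    else all (fun v => if v \in p then true else if okv p v then srch f (rcons p v) else true) (iota 0 13).
Proof. by []. Qed.

Lemma srchS' f p : size p != 13 -> srch f.+1 p =
    all (fun v => if v \in p then true else if okv p v then srch f (rcons p v) else true) (iota 0 13).
Proof. by move=> h; rewrite srchS (negbTE h). Qed.

Lemma aut_trivial (sg : 'I_13 -> 'I_13) : injective sg ->
  (forall i j k : 'I_13, Tf i j k -> Tf (sg i) (sg j) (sg k)) -> forall i, sg i = i.
Proof.
move=> inj pres.
pose q m := [seq (sg (inord x) : nat) | x <- iota 0 m].
have size_q m : size (q m) = m by rewrite size_map size_iota.
have nth_q m x : (x < m)%N -> nth 0 (q m) x = sg (inord x).
  by move=> hx; rewrite (nth_map 0) ?size_iota // nth_iota.
have qS m : q m.+1 = rcons (q m) (sg (inord m)).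
  rewrite /q; have -> : iota 0 m.+1 = iota 0 m ++ [:: m] by rewrite -addn1 iotaD.
  by rewrite map_cat cats1.
have claim : forall f m, (m <= 13)%N -> srch f (q m) -> q 13 = iota 0 13.
  elim=> [|f IH] m hm //.
  case: (eqVneq m 13) => [->|ne]; first by rewrite srchS size_q eqxx => /eqP.
  rewrite srchS' ?size_q //.
  have hm' : (m < 13)%N by rewrite ltn_neqAle hm andbT ne.
  move=> /seq.allP hall; have := hall (sg (inord m)); rewrite mem_iota /= add0n ltn_ord => /(_ isT).
  have nin : (sg (inord m) : nat) \notin q m.
    apply/mapP => -[x]; rewrite mem_iota add0n => /andP [_ hx] /val_inj /inj /(congr1 val).
    by rewrite /= !inordK // ?(ltn_trans hx hm') // => e; rewrite e ltnn in hx.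
  rewrite (negbTE nin).
  have ok : okv (q m) (sg (inord m)).
    apply/seq.allP => -[i j] hij; rewrite size_q in hij.
    have /seq.allP hPL := PL_ok; have := hPL m; rewrite mem_iota add0n hm' => /(_ isT).
    move=> /seq.allP hPLm; have /= /and3P [hi hj hT] := hPLm _ hij.
    rewrite !nth_q //.
    apply: pres; rewrite !inordK //; exact: (ltn_trans _ hm').
  by rewrite ok -qS; apply: IH.
have := claim 14 0 isT srch_ok => h13 i.
apply/val_inj; have := congr1 (nth 0 ^~ i) h13.
by rewrite nth_q // nth_iota // add0n inord_val.
Qed.
Notation "''o' k" := (@Ordinal 13 k isT) (at level 0, k at level 0).

Section Core2.
Variable K : numFieldType.

Lemma eta3 (t : K * K * K) : t = (t.1.1, t.1.2, t.2).
Proof. by case: t => [[]]. Qed.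

Lemma core2 (u : 'I_13 -> K * K * K) :
  (forall i j k : 'I_13, Tf i j k -> dt (u i) (u j) (u k) = 0) ->
  (forall i j k : 'I_13, ~~ Tf i j k -> dt (u i) (u j) (u k) != 0) ->
  (u 'o3).1.2 = 0 -> (u 'o3).2 = 0 -> (u 'o7).1.1 = 0 -> (u 'o7).2 = 0 ->
  (u 'o9).1.1 = 0 -> (u 'o9).1.2 = 0 -> u 'o2 = (1, 1, -1) ->
  (5 * (u 'o11).2 + 3 * (u 'o11).1.2) * (2 * (u 'o11).2 - (u 'o11).1.2) = 0.
Proof.
move=> hT hN e31 e32 e70 e72 e90 e91 e2.
have e3 : u 'o3 = ((u 'o3).1.1, 0, 0) by rewrite {1}[u 'o3]eta3 e31 e32.
have e7 : u 'o7 = (0, (u 'o7).1.2, 0) by rewrite {1}[u 'o7]eta3 e70 e72.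
have e9 : u 'o9 = (0, 0, (u 'o9).2) by rewrite {1}[u 'o9]eta3 e90 e91.
have Z (i j k : 'I_13) (h : Tf i j k) := hT i j k h.
have N (i j k : 'I_13) (h : ~~ Tf i j k) := hN i j k h.
move: (Z 'o1 'o3 'o7 isT) (Z 'o0 'o7 'o9 isT) (Z 'o7 'o8 'o9 isT) (Z 'o7 'o9 'o11 isT)
  (Z 'o3 'o5 'o9 isT) (Z 'o2 'o3 'o8 isT) (Z 'o2 'o5 'o7 isT) (Z 'o1 'o5 'o8 isT)
  (Z 'o0 'o1 'o2 isT) (Z 'o1 'o4 'o9 isT) (Z 'o0 'o3 'o4 isT) (Z 'o2 'o4 'o6 isT)
  (Z 'o0 'o5 'o6 isT) (Z 'o5 'o7 'o10 isT) (Z 'o1 'o10 'o11 isT) (Z 'o4 'o5 'o12 isT)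
  (Z 'o0 'o10 'o12 isT) (Z 'o6 'o11 'o12 isT)
  (N 'o3 'o7 'o9 isT) (N 'o3 'o5 'o7 isT) (N 'o3 'o7 'o8 isT) (N 'o1 'o3 'o9 isT)
  (N 'o0 'o3 'o7 isT) (N 'o3 'o4 'o7 isT) (N 'o3 'o6 'o7 isT) (N 'o3 'o7 'o10 isT)
  (N 'o3 'o7 'o12 isT) (N 'o3 'o9 'o11 isT).
rewrite e3 e7 e9 e2.
rewrite [u 'o0]eta3 [u 'o1]eta3 [u 'o4]eta3 [u 'o5]eta3 [u 'o6]eta3 [u 'o8]eta3
  [u 'o10]eta3 [u 'o11]eta3 [u 'o12]eta3.
exact: core.
Qed.
End Core2.
Section Mat2.
Variable R : realType.
Local Notation C := (R[i]).
Implicit Types B : 'M[C]_(13, 3).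

Definition numB B : C := - (DA B 'o3 'o7 'o11 * DA B 'o3 'o2 'o9).
Definition denB B : C := DA B 'o3 'o11 'o9 * DA B 'o3 'o7 'o2.

Lemma core_mat B : (forall i j k : 'I_13, Tf i j k -> DA B i j k = 0) ->
  (forall i j k : 'I_13, ~~ Tf i j k -> DA B i j k != 0) ->
  (5 * numB B + 3 * denB B) * (2 * numB B - denB B) = 0.
Proof.
move=> hT hN.
have n279 := hN 'o2 'o7 'o9 isT; have n329 := hN 'o3 'o2 'o9 isT.
have n372 := hN 'o3 'o7 'o2 isT; have n379 := hN 'o3 'o7 'o9 isT.
move: hT hN n279 n329 n372 n379; rewrite /numB /denB /DA.
set b := vec B => hT hN n279 n329 n372 n379.
pose tr v := (dt v (b 'o7) (b 'o9) / dt (b 'o2) (b 'o7) (b 'o9),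
  dt (b 'o3) v (b 'o9) / dt (b 'o3) (b 'o2) (b 'o9),
  - dt (b 'o3) (b 'o7) v / dt (b 'o3) (b 'o7) (b 'o2)).
pose ka := - dt (b 'o3) (b 'o7) (b 'o9) ^+ 2 /
    (dt (b 'o2) (b 'o7) (b 'o9) * dt (b 'o3) (b 'o2) (b 'o9) * dt (b 'o3) (b 'o7) (b 'o2)).
have tf (i j k : 'I_13) : dt (tr (b i)) (tr (b j)) (tr (b k)) = ka * dt (b i) (b j) (b k).
  exact: (@transfer _ (b 'o3) (b 'o7) (b 'o9) (b 'o2) (b i) (b j) (b k) n279 n329 n372).
have kn : ka != 0.
  by rewrite /ka mulf_neq0 ?oppr_eq0 ?expf_neq0 ?invr_eq0 ?mulf_neq0.
have H1 : forall i j k : 'I_13, Tf i j k -> dt (tr (b i)) (tr (b j)) (tr (b k)) = 0.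
  by move=> i j k h; rewrite tf hT // mulr0.
have H2 : forall i j k : 'I_13, ~~ Tf i j k -> dt (tr (b i)) (tr (b j)) (tr (b k)) != 0.
  by move=> i j k h; rewrite tf mulf_neq0 // hN.
have e2 : tr (b 'o2) = (1, 1, -1) by rewrite /tr mulNr !divff.
have := core2 (u := fun k => tr (b k)) H1 H2.
have h31 : (tr (b 'o3)).1.2 = 0 by rewrite /tr /=; ring.
have h32 : (tr (b 'o3)).2 = 0 by rewrite /tr /=; ring.
have h70 : (tr (b 'o7)).1.1 = 0 by rewrite /tr /=; ring.
have h72 : (tr (b 'o7)).2 = 0 by rewrite /tr /=; ring.
have h90 : (tr (b 'o9)).1.1 = 0 by rewrite /tr /=; ring.
have h91 : (tr (b 'o9)).1.2 = 0 by rewrite /tr /=; ring.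
move=> /(_ h31 h32 h70 h72 h90 h91 e2); rewrite /tr; cbn [fst snd] => hc.
transitivity ((dt (b 'o3) (b 'o7) (b 'o2) * dt (b 'o3) (b 'o2) (b 'o9)) ^+ 2 *
  ((5 * (- dt (b 'o3) (b 'o7) (b 'o11) / dt (b 'o3) (b 'o7) (b 'o2)) +
    3 * (dt (b 'o3) (b 'o11) (b 'o9) / dt (b 'o3) (b 'o2) (b 'o9))) *
   (2 * (- dt (b 'o3) (b 'o7) (b 'o11) / dt (b 'o3) (b 'o7) (b 'o2)) -
    dt (b 'o3) (b 'o11) (b 'o9) / dt (b 'o3) (b 'o2) (b 'o9)))).
  by field; rewrite n329 n372.
by rewrite hc mulr0.
Qed.


End Mat2.
Definition row3 (t : seq (seq int)) (i : nat) : int * int * int :=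
  (nth 0 (nth [::] t i) 0, nth 0 (nth [::] t i) 1, nth 0 (nth [::] t i) 2).
Definition Dint (t : seq (seq int)) (i j k : nat) : int := dt (row3 t i) (row3 t j) (row3 t k).

Definition all3 (P : nat -> nat -> nat -> bool) : bool :=
  all (fun i => all (fun j => all (fun k => P i j k) (iota 0 13)) (iota 0 13)) (iota 0 13).

Lemma mem_iota13 (i : 'I_13) : (i : nat) \in iota 0 13.
Proof. by rewrite mem_iota /= add0n ltn_ord. Qed.

Lemma all3P (P : nat -> nat -> nat -> bool) : all3 P -> forall i j k : 'I_13, P i j k.
Proof.
rewrite /all3 => /seq.allP h i j k.
have /seq.allP h2 := h i (mem_iota13 i).
have /seq.allP h3 := h2 j (mem_iota13 j).
exact: h3 k (mem_iota13 k).
Qed.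

Lemma chkT1 : all3 (fun i j k => Tf i j k == (Dint A1_table i j k == 0)).
Proof. by vm_compute. Qed.
Lemma chkT2 : all3 (fun i j k => Tf i j k == (Dint A2_table i j k == 0)).
Proof. by vm_compute. Qed.

Definition chk_arr (t : seq (seq int)) : bool :=
  all (fun i => has (fun j => has (fun k => Dint t i j k != 0) (iota 0 13)) (iota 0 13)) (iota 0 13)
  && all (fun i => all (fun j => (i == j) || has (fun k => Dint t i j k != 0) (iota 0 13)) (iota 0 13)) (iota 0 13).

Lemma chk_arr1 : chk_arr A1_table. Proof. by vm_compute. Qed.
Lemma chk_arr2 : chk_arr A2_table. Proof. by vm_compute. Qed.

Lemma has_ord (P : nat -> bool) : has P (iota 0 13) -> exists j : 'I_13, P j.
Proof.
move=> /hasP [j]; rewrite mem_iota add0n /= => hj hP.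
by exists (Ordinal hj).
Qed.

Section Tab.
Variable R : realType.
Local Notation C := (R[i]).

Lemma DA_table (t : seq (seq int)) (i j k : 'I_13) :
  DA (mx_of_table R 13 t) i j k = (Dint t i j k)%:~R.
Proof.
rewrite /DA /vec /mx_of_table !mxE /Dint /row3 /dt /=.
by rewrite !(intrD, intrM, intrN).
Qed.

Lemma arr_p1 (t : seq (seq int)) (i : 'I_13) : has (fun j => has (fun k => Dint t i j k != 0) (iota 0 13)) (iota 0 13) ->
  exists j k, DA (mx_of_table R 13 t) i j k != 0.
Proof.
move=> /has_ord [j] /has_ord [k hk]; exists j, k.
rewrite DA_table intr_eq0. exact hk.
Qed.
Lemma arr_p2 (t : seq (seq int)) (i j : 'I_13) : i != j -> (i == j :> nat) || has (fun k => Dint t i j k != 0) (iota 0 13) ->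
  exists k, DA (mx_of_table R 13 t) i j k != 0.
Proof.
move=> hij /orP [hE | /has_ord [k hk]].
  by move: hE; rewrite (val_eqE i j) (negbTE hij).
exists k.
rewrite DA_table intr_eq0.
exact hk.
Qed.
Lemma arr_table (t : seq (seq int)) : chk_arr t -> is_arrangement (mx_of_table R 13 t).
Proof.
move=> /andP [/seq.allP h1 /seq.allP h2]; apply: arr_of_T.
  by move=> i; apply: arr_p1; apply: h1 (mem_iota13 i).
move=> i j hij; apply: arr_p2 => //.
by have /seq.allP := h2 i (mem_iota13 i); apply; apply: mem_iota13.
Qed.
Lemma A1T (i j k : 'I_13) : (DA (arrA1 R) i j k == 0) = Tf i j k.
Proof.
rewrite /arrA1 DA_table intr_eq0; symmetry; apply/eqP; exact: (all3P chkT1 i j k).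
Qed.

Lemma A2T (i j k : 'I_13) : (DA (arrA2 R) i j k == 0) = Tf i j k.
Proof.
rewrite /arrA2 DA_table intr_eq0; symmetry; apply/eqP; exact: (all3P chkT2 i j k).
Qed.

Lemma arrA1_arr : is_arrangement (arrA1 R).
Proof. exact: arr_table chk_arr1. Qed.
Lemma arrA2_arr : is_arrangement (arrA2 R).
Proof. exact: arr_table chk_arr2. Qed.

Lemma defQ_table (t : seq (seq int)) : defined_over_Q (mx_of_table R 13 t).
Proof.
move=> i; exists 1, (\row_(l < 3) ((nth 0 (nth [::] t i) l)%:~R : rat)); split.
  exact: oner_neq0.
by apply/rowP => l; rewrite !mxE mul1r ratr_int.
Qed.
End Tab.
Section Final.
Variable R : realType.
Local Notation C := (R[i]).
Local Notation A1 := (arrA1 R).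
Local Notation A2 := (arrA2 R).
Implicit Types A B : 'M[C]_(13, 3).

Definition vmul (a : C * C * C) (M : 'M[C]_3) : C * C * C :=
  (a.1.1 * M i0 i0 + a.1.2 * M i1 i0 + a.2 * M i2 i0,
   a.1.1 * M i0 i1 + a.1.2 * M i1 i1 + a.2 * M i2 i1,
   a.1.1 * M i0 i2 + a.1.2 * M i1 i2 + a.2 * M i2 i2).
Definition rowv (M : 'M[C]_3) (l : 'I_3) : C * C * C := (M l i0, M l i1, M l i2).
Definition dM (M : 'M[C]_3) : C := dt (rowv M i0) (rowv M i1) (rowv M i2).

Lemma dt_vmul a b c M : dt (vmul a M) (vmul b M) (vmul c M) = dt a b c * dM M.
Proof.
rewrite /dM /rowv /vmul.
case: a => [[a0 a1] a2]; case: b => [[b0 b1] b2]; case: c => [[c0 c1] c2] /=.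
rewrite /dt; ring.
Qed.

Lemma rowv_mul (M N : 'M[C]_3) l : rowv (M *m N) l = vmul (rowv M l) N.
Proof. by rewrite /rowv /vmul !mxE !sum3. Qed.

Lemma dM_mul (M N : 'M[C]_3) : dM (M *m N) = dM M * dM N.
Proof. by rewrite /dM !rowv_mul dt_vmul. Qed.

Lemma dM1 : dM 1%:M = 1.
Proof. by rewrite /dM /rowv !mxE /= /dt; ring. Qed.

Lemma dM_unit (M : 'M[C]_3) : M \in unitmx -> dM M != 0.
Proof.
move=> hM; apply/negP => /eqP h.
have := congr1 dM (mulmxV hM); rewrite dM_mul h mul0r dM1 => /eqP.
by rewrite eq_sym oner_eq0.
Qed.

Lemma dt_scale (l m k : C) a b c :
  dt (l * a.1.1, l * a.1.2, l * a.2) (m * b.1.1, m * b.1.2, m * b.2) (k * c.1.1, k * c.1.2, k * c.2)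
  = l * m * k * dt a b c.
Proof.
case: a => [[a0 a1] a2]; case: b => [[b0 b1] b2]; case: c => [[c0 c1] c2] /=.
rewrite /dt; ring.
Qed.

Lemma vec_proj A B (p : {perm 'I_13}) (lam : 'I_13 -> C) (M : 'M[C]_3) :
  (forall i, row i B = lam i *: (row (p i) A *m M)) -> forall i,
  vec B i = (lam i * (vmul (vec A (p i)) M).1.1, lam i * (vmul (vec A (p i)) M).1.2,
             lam i * (vmul (vec A (p i)) M).2).
Proof.
move=> h i.
have e l : B i l = lam i * \sum_m A (p i) m * M m l.
  have := congr1 (fun X : 'M[C]_(1,3) => X 0 l) (h i); rewrite !mxE => ->.
  by congr (_ * _); apply: eq_bigr => m _; rewrite !mxE.
by rewrite /vec /vmul !e !sum3.
Qed.

Lemma DA_proj A B (p : {perm 'I_13}) (lam : 'I_13 -> C) (M : 'M[C]_3) :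
  (forall i, row i B = lam i *: (row (p i) A *m M)) -> forall i j k,
  DA B i j k = lam i * lam j * lam k * dM M * DA A (p i) (p j) (p k).
Proof.
move=> h i j k; rewrite /DA !(vec_proj h) dt_scale dt_vmul; ring.
Qed.

Definition Nd (s : {perm 'I_13}) A :=
  forall i j k : 'I_13, ~~ Tf (s i) (s j) (s k) -> DA A i j k != 0.
Definition rl (s : {perm 'I_13}) A : 'M[C]_(13, 3) := \matrix_(k, l) A ((s^-1)%g k) l.

Lemma DA_rl s A i j k : DA (rl s A) i j k = DA A ((s^-1)%g i) ((s^-1)%g j) ((s^-1)%g k).
Proof. by rewrite /DA /vec !mxE. Qed.

Definition fU A : C := 2 * numB A - denB A.
Definition fV A : C := 5 * numB A + 3 * denB A.

Definition pieceU s := [set A | Nd s A /\ fU (rl s A) != 0].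
Definition pieceV s := [set A | Nd s A /\ fV (rl s A) != 0].
Definition OU := [set A | exists s, pieceU s A].
Definition OV := [set A | exists s, pieceV s A].
Definition U := realization A1 `&` OU.
Definition V := realization A1 `&` OV.

Definition valid (s : {perm 'I_13}) A :=
  forall i j k : 'I_13, (DA A i j k == 0) = Tf (s i) (s j) (s k).

Lemma real_valid A : realization A1 A -> exists s, valid s A.
Proof.
move=> [hA [s hs]]; exists s => i j k.
by rewrite (lattice_T hA (arrA1_arr R) hs) A1T.
Qed.

Lemma valid_Nd s A : valid s A -> Nd s A.
Proof. by move=> hv i j k; rewrite -hv. Qed.

Lemma Nd_valid s s0 A : valid s0 A -> Nd s A -> s = s0.
Proof.
move=> hv hN.
pose sg := fun m => s ((s0^-1)%g m).
have inj : injective sg by move=> x y /perm_inj /perm_inj.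
have pres : forall i j k : 'I_13, Tf i j k -> Tf (sg i) (sg j) (sg k).
  move=> i j k h; apply: contraLR h => /hN /negbTE.
  by rewrite hv !permKV => ->.
have := aut_trivial inj pres => hs.
apply/permP => x; have := hs (s0 x); by rewrite /sg permK.
Qed.

Lemma valid_rl s A : valid s A -> forall i j k : 'I_13, (DA (rl s A) i j k == 0) = Tf i j k.
Proof. by move=> hv i j k; rewrite DA_rl hv !permKV. Qed.

Lemma valid_core s A : valid s A -> fV (rl s A) * fU (rl s A) = 0.
Proof.
move=> hv; apply: core_mat => i j k h.
  by apply/eqP; rewrite valid_rl.
by rewrite valid_rl.
Qed.

Lemma disjointUV A : realization A1 A -> OU A -> OV A -> False.
Proof.
move=> hr [s [hN hU]] [s' [hN' hV]].
have [s0 hv] := real_valid hr.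
have e := Nd_valid hv hN; have e' := Nd_valid hv hN'.
subst s s'.
have := valid_core hv => /eqP; rewrite mulf_eq0 => /orP [] /eqP h.
  by rewrite h eqxx in hV.
by rewrite h eqxx in hU.
Qed.

Lemma coverUV A : realization A1 A -> OU A \/ OV A.
Proof.
move=> hr; have [s0 hv] := real_valid hr.
have hN := valid_Nd hv.
case: (eqVneq (fU (rl s0 A)) 0) => hU; last by left; exists s0.
right; exists s0; split => //.
have h1 : DA (rl s0 A) 'o3 'o11 'o9 != 0 by rewrite (valid_rl hv).
have h2 : DA (rl s0 A) 'o3 'o7 'o2 != 0 by rewrite (valid_rl hv).
have hden : denB (rl s0 A) != 0 by rewrite /denB mulf_neq0.
have eD : denB (rl s0 A) = 2 * numB (rl s0 A).
  by apply/eqP; rewrite eq_sym -subr_eq0; apply/eqP.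
apply: contra_neq hden => hV0.
have h11 : (11 : C) != 0 by rewrite pnatr_eq0.
have : 11 * numB (rl s0 A) = 0 by rewrite -hV0 /fV eD; ring.
by move=> /(mul0_nzF h11) h0; rewrite eD h0 mulr0.
Qed.

Lemma permM_inv (p s : {perm 'I_13}) x : p (((p * s)^-1)%g x) = (s^-1)%g x.
Proof. by rewrite invMg permM permKV. Qed.

Lemma fU_scale A B (L : 'I_13 -> C) (d : C) :
  (forall i j k, DA B i j k = L i * L j * L k * d * DA A i j k) ->
  fU B = (L 'o3 * L 'o3 * L 'o7 * L 'o11 * L 'o2 * L 'o9 * d * d) * fU A.
Proof. by move=> h; rewrite /fU /numB /denB !h; ring. Qed.

Lemma fV_scale A B (L : 'I_13 -> C) (d : C) :
  (forall i j k, DA B i j k = L i * L j * L k * d * DA A i j k) ->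
  fV B = (L 'o3 * L 'o3 * L 'o7 * L 'o11 * L 'o2 * L 'o9 * d * d) * fV A.
Proof. by move=> h; rewrite /fV /numB /denB !h; ring. Qed.

Lemma proj_piece A B (f : 'M[C]_(13,3) -> C) :
  (forall A B (L : 'I_13 -> C) (d : C),
     (forall i j k, DA B i j k = L i * L j * L k * d * DA A i j k) ->
     f B = (L 'o3 * L 'o3 * L 'o7 * L 'o11 * L 'o2 * L 'o9 * d * d) * f A) ->
  proj_equiv A B -> forall s, Nd s A -> f (rl s A) != 0 ->
  exists s', Nd s' B /\ f (rl s' B) != 0.
Proof.
move=> hf [p [lam [M [hM [hl hrow]]]]] s hN hfA.
have hd := dM_unit hM.
have hDA := DA_proj hrow.
exists (p * s)%g; split.
  move=> i j k; rewrite !permM => /hN hA.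
  by rewrite hDA !mulf_neq0.
pose L k := lam (((p * s)^-1)%g k).
have hsc : forall i j k, DA (rl (p * s) B) i j k = L i * L j * L k * dM M * DA (rl s A) i j k.
  by move=> i j k; rewrite !DA_rl hDA !permM_inv.
by rewrite (hf _ _ _ _ hsc) /L !mulf_neq0.
Qed.

Lemma satU : saturated A1 U.
Proof.
split; first by move=> A [].
move=> A B _ hrB hpe [_ [s [hN hf]]]; split => //.
have [s' [hN' hf']] := proj_piece (@fU_scale) hpe hN hf.
by exists s'.
Qed.

Lemma satV : saturated A1 V.
Proof.
split; first by move=> A [].
move=> A B _ hrB hpe [_ [s [hN hf]]]; split => //.
have [s' [hN' hf']] := proj_piece (@fV_scale) hpe hN hf.
by exists s'.
Qed.

End Final.
Section Top.
Variable R : realType.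
Local Notation C := (R[i]).
Local Notation A1 := (arrA1 R).
Local Notation A2 := (arrA2 R).

Lemma open_nzC : open [set x : (C)^o | x != 0].
Proof.
rewrite openE => x /= hx; apply/nbhs_ballP; exists `|x|; first by rewrite /= normr_gt0.
move=> y /=; rewrite /ball /=.
by apply: contraTneq => ->; rewrite subr0 Order.POrderTheory.ltxx.
Qed.

Lemma cont_entry (i : 'I_13) (j : 'I_3) :
  continuous (fun A : 'M[C]_(13,3) => (A i j : (C)^o)).
Proof.
move=> A W /= HW.
exists (fun i' j' => if (i' == i) && (j' == j) then W else setT).
  move=> i' j'; case: ifP => [/andP[/eqP -> /eqP ->]|_]; first exact: HW.
  exact: filterT.
move=> N /= HN; have := HN i j; by rewrite !eqxx.
Qed.

Lemma open_nz (f : 'M[C]_(13,3) -> (C)^o) : continuous f -> open [set A | f A != 0].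
Proof.
move=> hf.
have -> : [set A | f A != 0] = f @^-1` [set x | x != 0] by [].
apply: open_comp; last exact: open_nzC.
by move=> x _; exact: hf.
Qed.

Implicit Types f g : 'M[C]_(13,3) -> (C)^o.

Lemma cM f g : continuous f -> continuous g -> continuous (fun A => f A * g A).
Proof. by move=> hf hg x; apply: continuousM; [exact: hf | exact: hg]. Qed.
Lemma cD f g : continuous f -> continuous g -> continuous (fun A => f A + g A).
Proof. by move=> hf hg x; apply: continuousD; [exact: hf | exact: hg]. Qed.
Lemma cN f : continuous f -> continuous (fun A => - f A).
Proof. by move=> hf x; apply: continuousN; exact: hf. Qed.
Lemma cB f g : continuous f -> continuous g -> continuous (fun A => f A - g A).
Proof. by move=> hf hg; apply: cD => //; apply: cN. Qed.
Lemma cC (c : C) : continuous (fun _ : 'M[C]_(13,3) => (c : (C)^o)).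
Proof. exact: cst_continuous. Qed.

Lemma cont_dt (f0 f1 f2 g0 g1 g2 h0 h1 h2 : 'M[C]_(13,3) -> (C)^o) :
  continuous f0 -> continuous f1 -> continuous f2 ->
  continuous g0 -> continuous g1 -> continuous g2 ->
  continuous h0 -> continuous h1 -> continuous h2 ->
  continuous (fun A => (dt (f0 A, f1 A, f2 A) (g0 A, g1 A, g2 A) (h0 A, h1 A, h2 A) : (C)^o)).
Proof.
move=> a0 a1 a2 b0 b1 b2 c0 c1 c2.
exact: (cD (cB (cM a0 (cB (cM b1 c2) (cM b2 c1))) (cM a1 (cB (cM b0 c2) (cM b2 c0))))
   (cM a2 (cB (cM b0 c1) (cM b1 c0)))).
Qed.

Lemma cont_DA (i j k : 'I_13) : continuous (fun A : 'M[C]_(13,3) => (DA A i j k : (C)^o)).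
Proof.
rewrite /DA /vec; apply: cont_dt; apply: cont_entry.
Qed.
Lemma cont_DArl s (i j k : 'I_13) : continuous (fun A : 'M[C]_(13,3) => (DA (rl s A) i j k : (C)^o)).
Proof.
have -> : (fun A : 'M[C]_(13,3) => (DA (rl s A) i j k : (C)^o)) =
  (fun A => DA A ((s^-1)%g i) ((s^-1)%g j) ((s^-1)%g k)).
  by apply: funext => A; rewrite DA_rl.
exact: cont_DA.
Qed.

Lemma cont_fU s : continuous (fun A : 'M[C]_(13,3) => (fU (rl s A) : (C)^o)).
Proof.
rewrite /fU /numB /denB.
apply: cB.
  apply: cM; first by apply: cC.
  by apply: cN; apply: cM; apply: cont_DArl.
by apply: cM; apply: cont_DArl.
Qed.

Lemma cont_fV s : continuous (fun A : 'M[C]_(13,3) => (fV (rl s A) : (C)^o)).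
Proof.
rewrite /fV /numB /denB.
apply: cD.
  apply: cM; first by apply: cC.
  by apply: cN; apply: cM; apply: cont_DArl.
apply: cM; first by apply: cC.
by apply: cM; apply: cont_DArl.
Qed.

Lemma open_piece (f : 'M[C]_(13,3) -> (C)^o) s : continuous f ->
  open [set A | Nd s A /\ f A != 0].
Proof.
move=> hf; rewrite openE => A [hN hfA].
change (nbhs A [set B | Nd s B /\ f B != 0]).
have h1 : nbhs A [set B | f B != 0].
  by have := open_nz hf; rewrite openE => /(_ A hfA).
have hyp : forall t : 'I_13 * 'I_13 * 'I_13,
    nbhs A (fun B => ~~ Tf (s t.1.1) (s t.1.2) (s t.2) -> DA B t.1.1 t.1.2 t.2 != 0).
  move=> t.
  case: (boolP (Tf (s t.1.1) (s t.1.2) (s t.2))) => h.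
    by apply: filterE => B /negP hB; exfalso; apply: hB.
  have := open_nz (@cont_DA t.1.1 t.1.2 t.2); rewrite openE => /(_ A (hN _ _ _ h)).
  by apply: filterS => B hB _.
have h2 := @filter_forall _ _ _ (nbhs A) (nbhs_filter A) hyp.
apply: (@filterS2 _ (nbhs A) (nbhs_filter A) _ _ _ _ h1 h2) => B hB1 hB2; split => // i j k; exact: (hB2 (i, j, k)).
Qed.

Lemma openOU : open (@OU R).
Proof.
rewrite openE => A [s hs].
change (nbhs A (@OU R)).
have := @open_piece _ s (@cont_fU s); rewrite openE => /(_ A hs) h.
by apply: (@filterS _ (nbhs A) (nbhs_filter A) _ _ _ h) => B hB; exists s.
Qed.

Lemma openOV : open (@OV R).
Proof.
rewrite openE => A [s hs].
change (nbhs A (@OV R)).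
have := @open_piece _ s (@cont_fV s); rewrite openE => /(_ A hs) h.
by apply: (@filterS _ (nbhs A) (nbhs_filter A) _ _ _ h) => B hB; exists s.
Qed.
End Top.
Section Main.
Variable R : realType.
Local Notation C := (R[i]).
Local Notation A1 := (arrA1 R).
Local Notation A2 := (arrA2 R).

Lemma rl1 (A : 'M[C]_(13,3)) : rl 1%g A = A.
Proof. by apply/matrixP => k l; rewrite mxE invg1 perm1. Qed.

Lemma fU_int t : fU (mx_of_table R 13 t) =
  (2 * - (Dint t 3 7 11 * Dint t 3 2 9) - Dint t 3 11 9 * Dint t 3 7 2)%:~R.
Proof.
rewrite /fU /numB /denB !DA_table.
by rewrite !(intrD, intrM, intrN).
Qed.

Lemma fV_int t : fV (mx_of_table R 13 t) =
  (5 * - (Dint t 3 7 11 * Dint t 3 2 9) + 3 * (Dint t 3 11 9 * Dint t 3 7 2))%:~R.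
Proof.
rewrite /fV /numB /denB !DA_table.
by rewrite !(intrD, intrM, intrN).
Qed.

Lemma realA1 : realization A1 A1.
Proof.
split; first exact: arrA1_arr.
by apply: lattice_of_T; [exact: arrA1_arr | exact: arrA1_arr | ].
Qed.

Lemma realA2 : realization A1 A2.
Proof.
split; first exact: arrA2_arr.
apply: lattice_of_T; [exact: arrA2_arr | exact: arrA1_arr | ].
by move=> i j k; rewrite A1T A2T.
Qed.

Lemma A1_OU : OU A1.
Proof.
exists 1%g; split.
  by move=> i j k; rewrite !perm1 -(A1T R).
by rewrite rl1 /arrA1 fU_int intr_eq0.
Qed.


Lemma A2_OV' : OV A2.
Proof.
exists 1%g; split.
  by move=> i j k; rewrite !perm1 -(A2T R).
by rewrite rl1 /arrA2 fV_int intr_eq0.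
Qed.

End Main.

Theorem theorem3p5 (R : realType) :
  is_rational_pair (arrA1 R) (arrA2 R).
Proof.
split; last by split; apply: defQ_table.
split; first exact: arrA1_arr.
split; first exact: arrA2_arr.
split.
  apply: lattice_of_T; [exact: arrA1_arr | exact: arrA2_arr |].
  by move=> i j k; rewrite A1T A2T.
move=> [K [[[hsub _] hconn] [KA1 KA2]]].
have oU : moduli_open (arrA1 R) (@U R).
  by split; [exact: satU | exists (@OU R); split; [exact: openOU |]].
have oV : moduli_open (arrA1 R) (@V R).
  by split; [exact: satV | exists (@OV R); split; [exact: openOV |]].
have cov : K `<=` (@U R) `|` (@V R).
  move=> A KA; have hr := hsub A KA.
  by case: (coverUV hr) => h; [left | right].
have neU : K `&` (@U R) !=set0.
  by exists (arrA1 R); split => //; split; [exact: realA1 | exact: A1_OU].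
have neV : K `&` (@V R) !=set0.
  by exists (arrA2 R); split => //; split; [exact: realA2 | exact: A2_OV'].
have [A [[KA [hr hU]] [_ hV]]] := hconn _ _ oU oV cov neU neV.
exact: (disjointUV hr hU hV).
Qed.
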